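(* In single-hop Peg Duotaire, if for every $k\in\mathbb{N}$ there exists a position with nim-value at least $k$, then the set $P\subseteq\{0,1\}^*$ of words $w$ such that the position $w$ is a $\mathcal{P}$-position is not a regular language.
   Context: Peg Duotaire is an impartial two-player game played on the infinite line of sites indexed by $\mathbb{Z}$, each site holding a peg or being a hole, with finitely many pegs. A word $w\in\{0,1\}^*$ denotes the position in which $w$ is written on consecutive sites ($1$ = peg, $0$ = hole) and all other sites are holes. A hop: for a peg at site $i$, a peg at site $i+d$ and a hole at site $i+2d$ ($d=\pm1$), move the peg from $i$ to $i+2d$ and remove the peg at $i+d$. In the single-hop version, each move consists of exactly one hop. Players alternate moves; a player unable to move loses. The nim-value of a position is the least nonnegative integer not among the nim-values of positions reachable in one move; a $\mathcal{P}$-position is one with nim-value $0$. *)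

(* Defs.v *)
From HB Require Import structures.
From mathcomp Require Import all_boot all_order all_algebra.
From mathcomp Require Import finmap.
Set Implicit Arguments. Unset Strict Implicit. Unset Printing Implicit Defensive.
Import GRing.Theory Num.Theory.
Local Open Scope fset_scope.
Local Open Scope ring_scope.

(* A position of Peg Duotaire: the finite set of sites (in Z) holding a peg. *)
Definition position := {fset int}.

Definition hop (S : position) (i d : int) : position :=
  ((S `\ i) `\ (i + d)) `|` [fset i + d *+ 2].

Definition hop_legal (S : position) (i d : int) : bool :=
  [&& i \in S, (i + d) \in S & (i + d *+ 2) \notin S].

Definition moves (S : position) : seq position :=
  flatten [seq [seq hop S i d | d <- [:: 1; -1] & hop_legal S i d]
          | i <- enum_fset S].

Definition mex (s : seq nat) : nat :=
  head 0%N [seq n <- iota 0 (size s).+1 | n \notin s].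

(* Grundy recursion with fuel; each move removes exactly one peg, so fuel
   #|S| suffices. *)
Fixpoint grundy_fuel (fuel : nat) (S : position) : nat :=
  match fuel with
  | 0%N => 0%N
  | fuel'.+1 => mex [seq grundy_fuel fuel' T | T <- moves S]
  end.

Definition nim_value (S : position) : nat := grundy_fuel (#|` S|).+1 S.

Definition word_pos (w : seq bool) : position :=
  [fset (i%:Z) | i in iota 0 (size w) & nth false w i].

Definition P_position (S : position) : bool := nim_value S == 0%N.

(* Regular languages over {0,1} (false = 0 = hole, true = 1 = peg),
   via deterministic finite automata. *)
Definition regular (L : seq bool -> Prop) : Prop :=
  exists (Q : finType) (q0 : Q) (delta : Q -> bool -> Q) (F : {set Q}),
    forall w, L w <-> foldl delta q0 w \in F.

(* Main.v *)
Require Import Defs.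
From mathcomp Require Import all_boot all_order all_algebra finmap.
From mathcomp Require Import zify.
Set Implicit Arguments. Unset Strict Implicit. Unset Printing Implicit Defensive.
Import GRing.Theory Num.Theory.
Local Open Scope fset_scope.

Lemma head_filter_iota (p : pred nat) a N :
  has p (iota a N) ->
  p (head 0%N [seq n <- iota a N | p n]) /\
  forall k, (a <= k)%N -> (k < head 0%N [seq n <- iota a N | p n])%N -> ~~ p k.
Proof.
elim: N a => [//|N IH] a /=.
case pa: (p a) => /= H.
  by split=> // k ak ka; lia.
have [H1 H2] := IH _ H; split=> // k ak kh.
case: (ltngtP a k) => [lt|gt|eq]; first exact: H2.
  lia.
by rewrite -eq pa.
Qed.

Lemma mex_has s : has (fun n => n \notin s) (iota 0 (size s).+1).
Proof.
case: (boolP (has _ _)) => // /hasPn H; exfalso.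
have := uniq_leq_size (iota_uniq 0 (size s).+1) (fun x hx => negbNE (H x hx)).
by rewrite size_iota ltnn.
Qed.

Lemma mex_notin s : mex s \notin s.
Proof. by have [] := head_filter_iota (mex_has s). Qed.

Lemma mex_min s k : (k < mex s)%N -> k \in s.
Proof.
move=> h; have [_ H] := head_filter_iota (mex_has s).
by have := H k (leq0n _) h; rewrite negbK.
Qed.

Lemma mex_eq s1 s2 : s1 =i s2 -> mex s1 = mex s2.
Proof.
move=> E; case: (ltngtP (mex s1) (mex s2)) => // h.
  by have := mex_min h; rewrite -E (negbTE (mex_notin _)).
by have := mex_min h; rewrite E (negbTE (mex_notin _)).
Qed.
Section Sub2S.
Local Open Scope fset_scope.

Lemma movesP S T :
  reflect (exists i d, [/\ i \in S, d \in [:: 1; -1]%R, hop_legal S i d & T = hop S i d])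
          (T \in moves S).
Proof.
apply: (iffP flattenP).
  case=> s /mapP [i iS ->] /mapP [d]; rewrite mem_filter => /andP [hl dm] ->.
  by exists i, d; split.
case=> i [d [iS dm hl ->]]; exists [seq hop S i d0 | d0 <- [:: 1; -1]%R & hop_legal S i d0].
  by apply/mapP; exists i.
by apply/mapP; exists d => //; rewrite mem_filter hl.
Qed.

Lemma d_cases (d : int) : d \in [:: 1; -1]%R -> d = 1%R \/ d = (-1)%R.
Proof. by rewrite !inE => /orP [] /eqP ->; [left|right]. Qed.

Lemma card_move S T : T \in moves S -> (#|` T| < #|` S|)%N.
Proof.
case/movesP=> i [d [iS dm /and3P [_ idS _] ->]].
rewrite /hop.
have ne : (i + d != i)%R by case/d_cases: dm => ->; rewrite -subr_eq0 addrC addKr.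
have E1 := cardfsD1 i S; rewrite iS in E1.
have E2 := cardfsD1 (i + d)%R (S `\ i); rewrite in_fsetD1 ne idS /= in E2.
apply: leq_ltn_trans (leq_card_fsetU _ _) _.
rewrite cardfs1 E1 E2 /=; move: (#|` _ `\ _ `\ _|) => x; lia.
Qed.

Lemma gf_stable n : forall m S, (#|` S| < n)%N -> (#|` S| < m)%N ->
  grundy_fuel n S = grundy_fuel m S.
Proof.
elim: n => [|n IH] [|m] S //= h1 h2.
congr mex; apply/eq_in_map => T hT; apply: IH.
  by apply: leq_trans (card_move hT) _; rewrite -ltnS.
by apply: leq_trans (card_move hT) _; rewrite -ltnS.
Qed.

Lemma nimE S : nim_value S = mex [seq nim_value T | T <- moves S].
Proof.
rewrite /nim_value /=; congr mex; apply/eq_in_map => T hT.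
exact: (gf_stable (card_move hT) (ltnSn _)).
Qed.

Lemma nim_move_neq S T : T \in moves S -> nim_value T != nim_value S.
Proof.
move=> hT; apply/eqP => E; have := mex_notin [seq nim_value T | T <- moves S].
by rewrite -nimE; move/negP; apply; apply/mapP; exists T.
Qed.

Lemma nim_move_lt S k : (k < nim_value S)%N -> exists2 T, T \in moves S & nim_value T = k.
Proof.
by move=> h; rewrite nimE in h; case/mapP: (mex_min h) => T hT ->; exists T.
Qed.

Lemma nim0 S : (nim_value S == 0%N) = all (fun T => nim_value T != 0%N) (moves S).
Proof.
apply/idP/allP.
  by move=> /eqP h T hT; rewrite -h; apply: nim_move_neq.
move=> H; case: (posnP (nim_value S)) => [//|/nim_move_lt [T hT e]].
by have := H T hT; rewrite e.
Qed.
End Sub2S.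
Section Sub3S.
Local Open Scope fset_scope.
Local Open Scope ring_scope.

Lemma hop_shift (S S' : position) (c i d : int) (H : forall x, (x + c \in S') = (x \in S)) :
  hop_legal S' (i + c) d = hop_legal S i d /\
  forall x, (x + c \in hop S' (i + c) d) = (x \in hop S i d).
Proof.
split; first by rewrite /hop_legal !(addrAC i c) !H.
move=> x; rewrite /hop !in_fsetU !in_fsetD1 !in_fset1 !(addrAC i c) !(inj_eq (addIr c)) H.
done.
Qed.

Lemma nim_shift n : forall (S S' : position) (c : int), (#|` S| < n)%N ->
  (forall x, (x + c \in S') = (x \in S)) -> nim_value S = nim_value S'.
Proof.
elim: n => [//|n IH] S S' c hn H.
rewrite nimE (nimE S'); apply: mex_eq => k; apply/mapP/mapP.
  case=> T hT ->; case/movesP: (hT) => i [d [iS dm hl ET]]; subst T.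
  have [L M] := hop_shift i d H.
  exists (hop S' (i + c) d); last first.
    apply: (IH _ _ c); [apply: leq_trans (card_move hT) _; by rewrite -ltnS | exact: M].
  by apply/movesP; exists (i + c), d; split => //; [rewrite H | rewrite L].
case=> T' /movesP [i' [d [iS dm hl ->]]] ->.
have [L M] := hop_shift (i' - c) d H.
rewrite subrK in L M.
have hT : hop S (i' - c) d \in moves S.
  by apply/movesP; exists (i' - c), d; split => //; [rewrite -H subrK | rewrite -L].
exists (hop S (i' - c) d) => //.
symmetry; apply: (IH _ _ c); [apply: leq_trans (card_move hT) _; by rewrite -ltnS | exact: M].
Qed.

Lemma nim_shift' (S S' : position) (c : int) :
  (forall x, (x + c \in S') = (x \in S)) -> nim_value S = nim_value S'.
Proof. exact: (@nim_shift (#|` S|).+1). Qed.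
End Sub3S.
Section Sub4S.
Local Open Scope fset_scope.
Local Open Scope ring_scope.

Definition sep (A B : position) := forall a b, a \in A -> b \in B ->
  a + (#|` A| + #|` B| + 2)%N%:Z <= b.

Lemma card_pos (A : position) i : i \in A -> (0 < #|` A|)%N.
Proof. by move=> h; rewrite (cardfsD1 i A) h. Qed.

Lemma sep3 A B a b : sep A B -> a \in A -> b \in B -> a + 3 <= b.
Proof.
move=> H ha hb; have := H a b ha hb; have := card_pos ha.
move: (#|` A|) (#|` B|) => m n; lia.
Qed.

Lemma dm2 (d : int) : d \in [:: 1; -1] -> d *+ 2 = d + d /\ (d = 1 \/ d = -1).
Proof. by move=> h; split; [rewrite mulr2n | apply: d_cases]. Qed.

Lemma hop_unionA A B i d : sep A B -> i \in A -> d \in [:: 1; -1] ->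
  hop_legal (A `|` B) i d = hop_legal A i d /\
  (hop_legal A i d -> hop (A `|` B) i d = hop A i d `|` B).
Proof.
move=> H iA dm; have [E2 dc] := dm2 dm.
have nB1 : (i + d \in B) = false.
  by apply/negbTE/negP => hb; have := sep3 H iA hb; lia.
have nB2 : (i + d *+ 2 \in B) = false.
  by apply/negbTE/negP => hb; have := sep3 H iA hb; rewrite E2; lia.
split; first by rewrite /hop_legal !in_fsetU iA nB1 nB2 !orbF.
case/and3P=> _ idA _.
apply/fsetP => x; rewrite !in_fsetU !in_fsetD1 !in_fset1.
case xB: (x \in B); last by rewrite in_fsetU xB !orbF.
have h1 := sep3 H iA xB; have h2 := sep3 H idA xB.
have -> : (x == i + d) = false by apply/negbTE/negP => /eqP e; lia.
have -> : (x == i) = false by apply/negbTE/negP => /eqP e; lia.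
by rewrite in_fsetU xB /= !orbT.
Qed.

Lemma hop_unionB A B i d : sep A B -> i \in B -> d \in [:: 1; -1] ->
  hop_legal (A `|` B) i d = hop_legal B i d /\
  (hop_legal B i d -> hop (A `|` B) i d = A `|` hop B i d).
Proof.
move=> H iB dm; have [E2 dc] := dm2 dm.
have nA1 : (i + d \in A) = false.
  by apply/negbTE/negP => ha; have := sep3 H ha iB; lia.
have nA2 : (i + d *+ 2 \in A) = false.
  by apply/negbTE/negP => ha; have := sep3 H ha iB; rewrite E2; lia.
split; first by rewrite /hop_legal !in_fsetU iB nA1 nA2 !orbT.
case/and3P=> _ idB _.
apply/fsetP => x; rewrite !in_fsetU !in_fsetD1 !in_fset1.
case xA: (x \in A); last by rewrite in_fsetU xA /=.
have h1 := sep3 H xA iB; have h2 := sep3 H xA idB.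
have -> : (x == i + d) = false by apply/negbTE/negP => /eqP e; lia.
have -> : (x == i) = false by apply/negbTE/negP => /eqP e; lia.
by rewrite in_fsetU xA.
Qed.

Lemma sep_moveA A B A' : sep A B -> A' \in moves A -> sep A' B.
Proof.
move=> H hA'; have hc := card_move hA'.
case/movesP: (hA') => i [d [iA dm /and3P [_ idA _] EA]]; subst A'.
have [E2 dc] := dm2 dm.
move=> a b; rewrite /hop !in_fsetU !in_fsetD1 in_fset1 => ha hb.
case/orP: ha => [/and3P [_ _ aA] | /eqP ->].
  have := H a b aA hb; move: hc; rewrite /hop.
  move: (#|` _ `|` _|) (#|` A|) (#|` B|) => x y z; lia.
have := H i b iA hb; have := H _ b idA hb; move: hc; rewrite /hop E2.
move: (#|` _ `|` _|) (#|` A|) (#|` B|) => x y z; lia.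
Qed.

Lemma sep_moveB A B B' : sep A B -> B' \in moves B -> sep A B'.
Proof.
move=> H hB'; have hc := card_move hB'.
case/movesP: (hB') => i [d [iB dm /and3P [_ idB _] EB]]; subst B'.
have [E2 dc] := dm2 dm.
move=> a b; rewrite /hop !in_fsetU !in_fsetD1 in_fset1 => ha.
case/orP => [/and3P [_ _ bB] | /eqP ->].
  have := H a b ha bB; move: hc; rewrite /hop.
  move: (#|` _ `|` _|) (#|` A|) (#|` B|) => x y z; lia.
have := H a i ha iB; have := H a _ ha idB; move: hc; rewrite /hop E2.
move: (#|` _ `|` _|) (#|` A|) (#|` B|) => x y z; lia.
Qed.

Lemma moves_union A B T : sep A B -> T \in moves (A `|` B) ->
  (exists2 A', A' \in moves A & T = A' `|` B) \/
  (exists2 B', B' \in moves B & T = A `|` B').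
Proof.
move=> H /movesP [i [d [iAB dm hl ->]]].
move: (iAB); rewrite in_fsetU => /orP [iA | iB].
  have [L M] := hop_unionA H iA dm; rewrite L in hl.
  left; exists (hop A i d); last exact: M.
  by apply/movesP; exists i, d.
have [L M] := hop_unionB H iB dm; rewrite L in hl.
right; exists (hop B i d); last exact: M.
by apply/movesP; exists i, d.
Qed.

Lemma moves_unionA A B A' : sep A B -> A' \in moves A -> A' `|` B \in moves (A `|` B).
Proof.
move=> H /movesP [i [d [iA dm hl ->]]].
have [L M] := hop_unionA H iA dm.
apply/movesP; exists i, d; split => //; first by rewrite in_fsetU iA.
  by rewrite L.
by rewrite M.
Qed.

Lemma moves_unionB A B B' : sep A B -> B' \in moves B -> A `|` B' \in moves (A `|` B).
Proof.
move=> H /movesP [i [d [iB dm hl ->]]].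
have [L M] := hop_unionB H iB dm.
apply/movesP; exists i, d; split => //; first by rewrite in_fsetU iB orbT.
  by rewrite L.
by rewrite M.
Qed.

Lemma sum_P n : forall A B, (#|` A| + #|` B| < n)%N -> sep A B ->
  (nim_value (A `|` B) == 0%N) = (nim_value A == nim_value B).
Proof.
elim: n => [//|n IH] A B hn H.
case: (eqVneq (nim_value A) (nim_value B)) => E.
  rewrite nim0; apply/allP => T /(moves_union H) [[A' hA' ->]|[B' hB' ->]].
    rewrite IH; first by rewrite -E nim_move_neq.
      by have := card_move hA'; move: (#|` A'|) (#|` A|) (#|` B|) hn => x y z; lia.
    exact: sep_moveA H hA'.
  rewrite IH; first by rewrite E eq_sym nim_move_neq.
    by have := card_move hB'; move: (#|` B'|) (#|` A|) (#|` B|) hn => x y z; lia.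
  exact: sep_moveB H hB'.
apply/negbTE; rewrite nim0; apply/allPn.
case: (ltngtP (nim_value A) (nim_value B)) E => // lt _.
  have [B' hB' e] := nim_move_lt lt.
  exists (A `|` B'); first exact: moves_unionB.
  rewrite negbK IH; first by rewrite e.
    by have := card_move hB'; move: (#|` B'|) (#|` A|) (#|` B|) hn => x y z; lia.
  exact: sep_moveB H hB'.
have [A' hA' e] := nim_move_lt lt.
exists (A' `|` B); first exact: moves_unionA.
rewrite negbK IH; first by rewrite e.
  by have := card_move hA'; move: (#|` A'|) (#|` A|) (#|` B|) hn => x y z; lia.
exact: sep_moveA H hA'.
Qed.
End Sub4S.
Section Sub5S.
Local Open Scope fset_scope.
Local Open Scope ring_scope.

Lemma nth_lt (w : seq bool) j : nth false w j -> (j < size w)%N.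
Proof. by case: ltnP => // le; rewrite nth_default. Qed.

Lemma mem_word_pos w (x : int) : (x \in word_pos w) = (0 <= x) && nth false w `|x|%N.
Proof.
apply/imfsetP/andP.
  2: case=> h0 hn.
  case=> j; rewrite inE /= => /andP [_ hn] ->; split => //.
exists `|x|%N; first by rewrite inE /= mem_iota /= (nth_lt hn).
lia.
Qed.

Lemma card_word_pos w : (#|` word_pos w| <= count id w)%N.
Proof.
rewrite /word_pos; apply: leq_trans (leq_imfset_card _ _ _) _.
rewrite /enum_finmem /= filter_undup; apply: leq_trans (size_undup _) _.
rewrite size_filter; have E := mkseq_nth false w.
rewrite -[in X in (_ <= X)%N]E /mkseq count_map.
by apply: eq_leq; apply: eq_count.
Qed.

Lemma nth_pad k (y : seq bool) j :
  nth false (nseq k false ++ y) j = if (j < k)%N then false else nth false y (j - k).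
Proof. by rewrite nth_cat size_nseq nth_nseq; case: (j < k)%N. Qed.

Lemma word_cat x m y :
  word_pos (x ++ nseq m false ++ y) = word_pos x `|` word_pos (nseq (size x + m) false ++ y).
Proof.
apply/fsetP => z; rewrite in_fsetU !mem_word_pos.
case: (boolP (0 <= z)) => //= hz.
rewrite nth_cat nth_pad nth_pad.
case: (ltnP `|z|%N (size x)) => h.
  by rewrite (_ : (`|z| < size x + m)%N) ?orbF //; lia.
rewrite (nth_default false h) /=.
have -> : (`|z| - size x < m)%N = (`|z| < size x + m)%N by lia.
by rewrite subnDA.
Qed.

Lemma nim_pad k y : nim_value (word_pos (nseq k false ++ y)) = nim_value (word_pos y).
Proof.
symmetry; apply: (@nim_shift' _ _ k%:Z) => x; rewrite !mem_word_pos nth_pad.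
case: (boolP (0 <= x)) => hx.
  have -> : (0 <= x + k%:Z) = true by lia.
  have -> : absz (x + k%:Z) = (absz x + k)%N by lia.
  by rewrite ltnNge leq_addl /= addnK.
case: (boolP (0 <= x + k%:Z)) => //= h.
by rewrite (_ : (absz (x + k%:Z)%R < k)%N) //; lia.
Qed.

Lemma count_pad k (y : seq bool) : count id (nseq k false ++ y) = count id y.
Proof. by rewrite count_cat count_nseq mul0n. Qed.

Lemma sep_words x m y : (size x + size y < m)%N ->
  sep (word_pos x) (word_pos (nseq (size x + m) false ++ y)).
Proof.
move=> hm a b; rewrite !mem_word_pos nth_pad => /andP [ha0 hax] /andP [hb0].
have ha := nth_lt hax.
case: ifP => // hb1 hby.
have c1 := leq_trans (card_word_pos x) (count_size id x).
have c2 := card_word_pos (nseq (size x + m) false ++ y).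
rewrite count_pad in c2; have {c2} c2 := leq_trans c2 (count_size id y).
move: c1 c2 => c1 c2.
move: (#|` word_pos x|) (#|` word_pos (nseq (size x + m) false ++ y)|) c1 c2 => p q c1 c2.
lia.
Qed.

Lemma leq_sumn_map (T : eqType) (f : T -> nat) s x : x \in s -> (f x <= sumn (map f s))%N.
Proof.
elim: s => //= y s IH; rewrite inE => /orP [/eqP ->| /IH h]; first exact: leq_addr.
exact: leq_trans h (leq_addl _ _).
Qed.

Lemma pos_to_word (S : position) : exists w, nim_value (word_pos w) = nim_value S.
Proof.
pose M := sumn [seq `|x|%N | x <- enum_fset S].
have hM : forall x, x \in S -> (`|x| <= M)%N.
  by move=> x hx; apply: leq_sumn_map.
exists (mkseq (fun j => (j%:Z - M%:Z) \in S) (2 * M).+1).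
symmetry; apply: (@nim_shift' _ _ M%:Z) => x; rewrite mem_word_pos.
case: (boolP (x \in S)) => hx.
  have := hM x hx => hb.
  have -> : (0 <= x + M%:Z) = true by lia.
  rewrite nth_mkseq; last by lia.
  by have -> : (absz (x + M%:Z))%:Z - M%:Z = x by lia.
case: (boolP (0 <= x + M%:Z)) => //= h.
case: (ltnP (absz (x + M%:Z)) (2 * M).+1) => h2.
  by rewrite nth_mkseq // (_ : (absz (x + M%:Z))%:Z - M%:Z = x) ?(negbTE hx) //; lia.
by rewrite nth_default // size_mkseq.
Qed.
End Sub5S.
Local Open Scope fset_scope.

Lemma P_pad x m y : (size x + size y < m)%N ->
  P_position (word_pos (x ++ nseq m false ++ y)) =
  (nim_value (word_pos x) == nim_value (word_pos y)).
Proof.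
move=> hm; rewrite /P_position word_cat.
rewrite (@sum_P (#|` word_pos x| + #|` word_pos (nseq (size x + m) false ++ y)|).+1) //.
  by rewrite nim_pad.
exact: sep_words.
Qed.

Lemma words_distinct :
  (forall k : nat, exists S : position, (k <= nim_value S)%N) ->
  forall n, exists s : seq (seq bool), size s = n /\
    uniq [seq nim_value (word_pos w) | w <- s].
Proof.
move=> Hk; elim => [|n [s [hs hu]]]; first by exists [::].
have [S hS] := Hk (sumn [seq nim_value (word_pos w) | w <- s]).+1.
have [w hw] := pos_to_word S.
exists (w :: s); split; first by rewrite /= hs.
rewrite /= hu andbT; apply/negP => hin.
have := leq_sumn_map id hin; rewrite map_id hw; lia.
Qed.

Theorem lemma3 :
  (forall k : nat, exists S : position, (k <= nim_value S)%N) ->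
  ~ regular (fun w => P_position (word_pos w)).
Proof.
move=> Hk [Q [q0 [delta [F HF]]]].
have [s [hs hu]] := words_distinct Hk (#|Q|).+1.
pose m := (2 * sumn [seq size w | w <- s]).+1.
pose st := [seq foldl delta q0 (w ++ nseq m false) | w <- s].
have : ~~ uniq st.
  apply/negP => ust.
  have := uniq_leq_size ust (fun q _ => mem_enum (pred_of_simpl predT) q).
  by rewrite size_map hs -cardE ltnn.
case/(uniqPn q0) => i [j [ij jst]].
rewrite /st size_map in jst.
have ist : (i < size s)%N by lia.
rewrite !(nth_map [::]) // => est.
set x := nth [::] s i in est; set y := nth [::] s j in est.
have hx : (size x <= sumn [seq size w | w <- s])%N by apply: leq_sumn_map; apply: mem_nth.
have hy : (size y <= sumn [seq size w | w <- s])%N by apply: leq_sumn_map; apply: mem_nth.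
have nxy : nim_value (word_pos x) != nim_value (word_pos y).
  have := nth_uniq 0%N (_ : (i < size [seq nim_value (word_pos w) | w <- s])%N)
     (_ : (j < size [seq nim_value (word_pos w) | w <- s])%N) hu.
  rewrite !size_map => /(_ ist jst); rewrite !(nth_map [::]) // => ->.
  by rewrite neq_ltn ij.
have Px : foldl delta q0 (x ++ nseq m false ++ x) \in F.
  by apply/HF; rewrite P_pad //; lia.
have : foldl delta q0 (y ++ nseq m false ++ x) \in F.
  by move: Px; rewrite !catA foldl_cat est -foldl_cat.
move/HF; rewrite P_pad; last by lia.
by rewrite eq_sym (negbTE nxy).
Qed.
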